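(* Let $\mathbb{F}$ be a finite field, $K=\mathbb{F}(\!(\pi)\!)$ and $\mathcal{O}=\mathbb{F}[\![\pi]\!]$. The action of $\mathrm{AGL}_1(\mathcal{O})$ on $\mathcal{T}_\mathcal{O}$ is coarsely diagonal.
   Context: $\mathrm{AGL}_1(\mathcal{O})=\mathcal{O}^\times\ltimes\mathcal{O}$ consists of pairs $(\alpha,\beta)$ acting on $K$ by $\gamma\mapsto\alpha\gamma+\beta$. With $\mathfrak{m}=\pi\mathcal{O}$, the tree $\mathcal{T}_\mathcal{O}$ has vertices $\gamma\bmod\mathfrak{m}^e$ ($\gamma\in\mathcal{O}$, $e\ge0$), with $\gamma\bmod\mathfrak{m}^e$ adjacent to $\delta\bmod\mathfrak{m}^f$ iff $|e-f|=1$ and $\gamma\equiv\delta\bmod\mathfrak{m}^{\min\{e,f\}}$; $\mathrm{AGL}_1(\mathcal{O})$ acts (faithfully) by $(\alpha,\beta).(\gamma\bmod\mathfrak{m}^e)=\alpha\gamma+\beta\bmod\mathfrak{m}^e$. Ordering $\mathbb{F}$ identifies $\mathcal{T}_\mathcal{O}$ with the rooted $|\mathbb{F}|$-ary tree. For a tree automorphism $f$ with wreath recursion $f=\rho(f)(f_1,\dots,f_m)$ (where $f(iw)=\rho(f)(i)f_i(w)$), its states form the smallest set containing $f$ and closed under $f\mapsto f_i$. A group $H$ of tree automorphisms is coarsely diagonal if for every $h\in H$ and every state $h'$ of $h$, $(h')^{-1}h$ has finite order; an action is coarsely diagonal if it is faithful and its image is. *)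

(* Defs.v *)
From mathcomp Require Import all_boot all_algebra.
Set Implicit Arguments. Unset Strict Implicit. Unset Printing Implicit Defensive.
Import GRing.Theory.
Local Open Scope ring_scope.

(* O = F[[pi]] : a power series is its coefficient sequence. *)
Section Defs.
Variable F : finFieldType.

Definition pseries := nat -> F.

Definition ps_mul (a b : pseries) : pseries :=
  fun n => \sum_(i < n.+1) a i * b (n - i)%N.
Definition ps_add (a b : pseries) : pseries := fun n => a n + b n.

Definition ps_unit (a : pseries) : Prop := a 0%N != 0.

(* The tree T_O: the vertex gamma mod m^e is identified with the word
   [gamma_0; ...; gamma_{e-1}] in seq F (rooted |F|-ary tree, alphabet F). *)
Definition word_series (w : seq F) : pseries := fun j => nth 0 w j.

Definition agl_act (alpha beta : pseries) (w : seq F) : seq F :=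
  mkseq (fun i => ps_add (ps_mul alpha (word_series w)) beta i) (size w).

Definition is_tree_aut (f : seq F -> seq F) : Prop :=
  bijective f /\ (forall w, size (f w) = size w) /\
  (forall w k, f (take k w) = take k (f w)).

(* section f_i in the wreath recursion f(iw) = rho(f)(i) f_i(w) *)
Definition section (f : seq F -> seq F) (i : F) : seq F -> seq F :=
  fun w => behead (f (i :: w)).

Inductive is_state (f : seq F -> seq F) : (seq F -> seq F) -> Prop :=
  | state_self : is_state f f
  | state_sec g i : is_state f g -> is_state f (section g i).

(* H coarsely diagonal: for h in H and h' a state of h, h'^{-1} h has finite
   order (g below is h'^{-1} h, characterised by h' o g = h). *)
Definition coarsely_diagonal (H : (seq F -> seq F) -> Prop) : Prop :=
  forall h, H h -> forall h', is_state h h' ->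
    exists g : seq F -> seq F, (forall w, h' (g w) = h w) /\
      exists n : nat, (0 < n)%N /\ forall w, iter n g w = w.

End Defs.

(* Main.v *)
Require Import Defs.
From mathcomp Require Import all_boot all_algebra.
From mathcomp Require Import finfield zify.
Set Implicit Arguments. Unset Strict Implicit. Unset Printing Implicit Defensive.
Import GRing.Theory.

Section Aux.
Variable F : finFieldType.
Local Open Scope ring_scope.
Implicit Types a b d X Y : pseries F.

Lemma ps_mul_ext a X Y n : (forall j, (j <= n)%N -> X j = Y j) ->
  ps_mul a X n = ps_mul a Y n.
Proof. by move=> H; apply: eq_bigr => i _; rewrite H // leq_subr. Qed.

Lemma ps_mul_recl a X n :
  ps_mul a X n = a 0%N * X n + \sum_(i < n) a i.+1 * X (n - i.+1)%N.
Proof. by rewrite /ps_mul big_ord_recl /= subn0. Qed.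

Lemma ps_mul_addr a X Y n :
  ps_mul a (fun j => X j + Y j) n = ps_mul a X n + ps_mul a Y n.
Proof. by rewrite /ps_mul -big_split; apply: eq_bigr => i _; rewrite mulrDr. Qed.

Lemma ps_mul_uniq a X Y n : a 0%N != 0 ->
  (forall k, (k < n)%N -> ps_mul a X k = ps_mul a Y k) ->
  forall k, (k < n)%N -> X k = Y k.
Proof.
move=> a0 H; elim/ltn_ind => k IH kn.
have := H k kn; rewrite !ps_mul_recl.
have -> : \sum_(i < k) a i.+1 * X (k - i.+1)%N = \sum_(i < k) a i.+1 * Y (k - i.+1)%N.
  apply: eq_bigr => i _; rewrite IH //.
    by have := ltn_ord i; lia.
  by have := ltn_ord i; lia.
by move/addIr/(mulfI a0).
Qed.

Section Div.
Variables a d : pseries F.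
Definition nxt (s : seq F) : F :=
  (d (size s) - \sum_(i < size s) a i.+1 * nth 0 s (size s - i.+1)%N) / a 0%N.
Fixpoint cl n := if n is n'.+1 then rcons (cl n') (nxt (cl n')) else [::].
Lemma size_cl n : size (cl n) = n.
Proof. by elim: n => //= n IH; rewrite size_rcons IH. Qed.
Lemma nth_cl n m k : (k < n)%N -> (n <= m)%N -> nth 0 (cl m) k = nth 0 (cl n) k.
Proof.
move=> kn; elim: m => [|m IH]; first by rewrite leqn0 => /eqP ->.
rewrite leq_eqVlt => /orP [/eqP -> //|]; rewrite ltnS => nm.
by rewrite /= nth_rcons size_cl (leq_trans kn nm); exact: IH.
Qed.
Definition sdiv : pseries F := fun k => nth 0 (cl k.+1) k.
Lemma nth_cl_sdiv n k : (k < n)%N -> nth 0 (cl n) k = sdiv k.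
Proof. by move=> kn; rewrite /sdiv (@nth_cl k.+1 n k). Qed.
Lemma sdivP : a 0%N != 0 -> forall n, ps_mul a sdiv n = d n.
Proof.
move=> a0 n; rewrite ps_mul_recl.
have -> : sdiv n = nxt (cl n) by rewrite /sdiv /= nth_rcons size_cl ltnn eqxx.
rewrite /nxt size_cl.
have -> : \sum_(i < n) a i.+1 * nth 0 (cl n) (n - i.+1)%N =
          \sum_(i < n) a i.+1 * sdiv (n - i.+1)%N.
  by apply: eq_bigr => i _; rewrite nth_cl_sdiv //; have := ltn_ord i; lia.
by rewrite mulrC divfK // subrK.
Qed.
End Div.

Lemma word_eq (w1 w2 : seq F) : size w1 = size w2 ->
  (forall k, (k < size w1)%N -> nth 0 w1 k = nth 0 w2 k) -> w1 = w2.
Proof. by move=> S H; apply: (eq_from_nth (x0 := 0)). Qed.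

Lemma size_agl (alpha beta : pseries F) (w : seq F) : size (agl_act alpha beta w) = size w.
Proof. by rewrite size_mkseq. Qed.

Lemma nth_agl (alpha beta : pseries F) (w : seq F) k : (k < size w)%N ->
  nth 0 (agl_act alpha beta w) k = ps_mul alpha (word_series w) k + beta k.
Proof. by move=> kw; rewrite /agl_act nth_mkseq. Qed.

Lemma agl_inj (alpha beta : pseries F) : ps_unit alpha -> injective (agl_act alpha beta).
Proof.
move=> a0 w1 w2 E.
have Hsz : size w1 = size w2 by rewrite -(size_agl alpha beta w1) E size_agl.
apply: word_eq => [|k kn]; first exact: Hsz.
apply: (@ps_mul_uniq alpha (word_series w1) (word_series w2) (size w1) a0) => // j jn.
have jn2 : (j < size w2)%N by rewrite -Hsz.
have := congr1 (fun s => nth 0 s j) E; rewrite /= !nth_agl //.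
by move/addIr.
Qed.

Lemma agl_section (alpha b : pseries F) (i : F) (w : seq F) :
  behead (agl_act alpha b (i :: w)) =
  agl_act alpha (fun m => b m.+1 + alpha m.+1 * i) w.
Proof.
apply: word_eq; first by rewrite size_behead !size_agl.
move=> k; rewrite size_behead size_agl => kw.
rewrite nth_behead nth_agl // nth_agl //.
rewrite /ps_mul big_ord_recr /= subnn.
have -> : \sum_(j < k.+1) alpha (widen_ord (leqnSn k.+1) j) *
      word_series (i :: w) (k.+1 - widen_ord (leqnSn k.+1) j)%N =
    \sum_(j < k.+1) alpha j * word_series w (k - j)%N.
  apply: eq_bigr => j _ /=; rewrite subSn //; have := ltn_ord j; lia.
by rewrite -addrA (addrC (alpha k.+1 * i)).
Qed.

Lemma states_form (alpha beta : pseries F) h' : is_state (agl_act alpha beta) h' ->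
  exists b', forall w, h' w = agl_act alpha b' w.
Proof.
elim=> [|g i _ [b' Hb]]; first by exists beta.
exists (fun m => b' m.+1 + alpha m.+1 * i) => w.
by rewrite /section Hb agl_section.
Qed.

Lemma part1 : forall alpha beta : pseries F, ps_unit alpha -> is_tree_aut (agl_act alpha beta).
Proof.
  move=> alpha beta a0; split; last split.
  - pose g (w : seq F) := mkseq (sdiv alpha (fun j => nth 0%R w j - beta j)) (size w).
    have hg : forall w, agl_act alpha beta (g w) = w.
      move=> w; apply: word_eq; first by rewrite size_agl size_mkseq.
      rewrite size_agl size_mkseq => k kw.
      rewrite nth_agl ?size_mkseq //.
      rewrite (@ps_mul_ext alpha _ (sdiv alpha (fun j => nth 0%R w j - beta j))).
        by rewrite sdivP // subrK.
      move=> j jk; rewrite /word_series nth_mkseq //; exact: leq_ltn_trans jk kw.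
    exists g => // w; apply: (@agl_inj alpha beta a0); by rewrite hg.
  - exact: size_agl.
  - move=> w k; apply: word_eq; first by rewrite size_agl !size_take size_agl.
    rewrite size_agl => i /[dup] iS; rewrite size_take_min leq_min => /andP [ik iw].
    rewrite nth_agl // nth_take // nth_agl //.
    congr (_ + _); apply: ps_mul_ext => j ji.
    by rewrite /word_series nth_take //; exact: leq_ltn_trans ji ik.
Qed.

Lemma part2 : forall alpha beta alpha' beta' : pseries F, ps_unit alpha -> ps_unit alpha' ->
     (forall w, agl_act alpha beta w = agl_act alpha' beta' w) ->
     (forall n, alpha n = alpha' n) /\ (forall n, beta n = beta' n).
Proof.
  move=> alpha beta alpha' beta' _ _ E.
  have zero : forall (a : pseries F) n, ps_mul a (word_series (nseq n.+1 0%R)) n = 0%R.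
    move=> a n; rewrite /ps_mul big1 // => i _.
    by rewrite /word_series nth_nseq if_same mulr0.
  have Eb : forall n, beta n = beta' n.
    move=> n; have := congr1 (fun s => nth 0%R s n) (E (nseq n.+1 0%R)).
    cbv beta; rewrite !nth_agl ?size_nseq // !zero !add0r; done.
  have one : forall (a : pseries F) n,
      ps_mul a (word_series (1%R :: nseq n 0%R)) n = a n.
    move=> a n; rewrite /ps_mul big_ord_recr /= subnn big1 ?add0r ?mulr1 //.
    move=> i _ /=; have -> : (n - i = (n - i.+1).+1)%N by have := ltn_ord i; lia.
    by rewrite /word_series /= nth_nseq if_same mulr0.
  split=> // n; have := congr1 (fun s => nth 0%R s n) (E (1%R :: nseq n 0%R)).
  have hs : (n < size ((1%R : F) :: nseq n 0%R))%N by change (n < (size (nseq n (0%R:F))).+1)%N; rewrite size_nseq.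
  by cbv beta; rewrite !nth_agl // !one Eb => /addIr.
Qed.

Lemma agl_bext (alpha b1 b2 : pseries F) w : (forall j, b1 j = b2 j) ->
  agl_act alpha b1 w = agl_act alpha b2 w.
Proof. by move=> H; rewrite /agl_act; apply: eq_mkseq => i; rewrite /ps_add H. Qed.

Definition tr (c : pseries F) (w : seq F) : seq F :=
  mkseq (fun j => nth 0%R w j + c j) (size w).

Lemma agl_tr (alpha b' c : pseries F) w :
  agl_act alpha b' (tr c w) = agl_act alpha (fun j => ps_mul alpha c j + b' j) w.
Proof.
rewrite /tr; apply: word_eq; first by rewrite !size_agl size_mkseq.
move=> k; rewrite size_agl size_mkseq => kw.
rewrite !nth_agl ?size_mkseq //.
rewrite (@ps_mul_ext alpha _ (fun j => word_series w j + c j)); last first.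
  move=> j jk; rewrite /word_series nth_mkseq //; exact: leq_ltn_trans jk kw.
by rewrite ps_mul_addr addrA.
Qed.

Lemma iter_tr (c : pseries F) n w :
  iter n (tr c) w = mkseq (fun j => nth 0%R w j + c j *+ n) (size w).
Proof.
elim: n w => [|n IH] w.
  apply: word_eq; first by rewrite size_mkseq.
  by move=> k kw; rewrite nth_mkseq // addr0.
rewrite iterS IH /tr; apply: word_eq; first by rewrite !size_mkseq.
move=> k; rewrite !size_mkseq => kw.
by rewrite !nth_mkseq ?size_mkseq // mulrS -addrA (addrC (c k)).
Qed.

Lemma part3 : coarsely_diagonal
    (fun h => exists alpha beta : pseries F, ps_unit alpha /\ h = agl_act alpha beta).
Proof.
move=> h [alpha [beta [a0 ->]]] h' /states_form [b' Hb].
have cP := sdivP (fun j => beta j - b' j) a0.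
move: (sdiv _ _) cP => c cP.
exists (tr c); split.
  move=> w; rewrite Hb agl_tr; apply: agl_bext => j.
  by rewrite cP subrK.
have [p _ pF] := finPcharP F.
exists p; split; first exact: prime_gt0 (pcharf_prime pF).
move=> w; rewrite iter_tr; apply: word_eq; first by rewrite size_mkseq.
move=> k; rewrite size_mkseq => kw; rewrite nth_mkseq //.
by rewrite (mulrn_pchar pF) addr0.
Qed.

End Aux.

Theorem lemma6p7 (F : finFieldType) :
  (* the action is by tree automorphisms *)
  (forall alpha beta : pseries F, ps_unit alpha -> is_tree_aut (agl_act alpha beta)) /\
  (* faithful *)
  (forall alpha beta alpha' beta' : pseries F, ps_unit alpha -> ps_unit alpha' ->
     (forall w, agl_act alpha beta w = agl_act alpha' beta' w) ->
     (forall n, alpha n = alpha' n) /\ (forall n, beta n = beta' n)) /\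
  (* the image is coarsely diagonal *)
  coarsely_diagonal
    (fun h => exists alpha beta : pseries F, ps_unit alpha /\ h = agl_act alpha beta).
Proof.
split; first exact: (@part1 F).
split; first exact: (@part2 F).
exact: (@part3 F).
Qed.
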